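(* In the setting below, the map $\bar D\mapsto s_\mathrm{eq}(\bar s,\bar D)$ is differentiable for $\bar D\in(D_{\min},D_{\max})$, it satisfies $\mu(s_\mathrm{eq})=\bar D-G_1(s_\mathrm{eq}-\bar s)$, and $$\frac{\partial s_\mathrm{eq}}{\partial\bar D}(\bar s,\bar D)=\frac{1}{G_1+\mu'(s_\mathrm{eq}(\bar s,\bar D))}.$$ Setting: $s_\mathrm{in}>0$, $0<s_{\min}<s_\mathrm{in}$, $0<D_{\min}<D_{\max}$, $G_1>0$, $\bar s\in[s_{\min},s_\mathrm{in})$; $\mu:[0,s_\mathrm{in}]\to[0,\infty)$ is continuously differentiable with $\mu(0)=0$, $\mu(s)>0$ for $s>0$, $D_{\min}<\mu(s)$ for all $s\in[s_{\min},s_\mathrm{in}]$, $D_{\max}>\mu(s)$ for all $s\in[0,s_\mathrm{in}]$; $G_1>-\min_{[0,s_\mathrm{in}]}\mu'$ and $G_1>-(\mu(s_\mathrm{in})-\bar D)/(s_\mathrm{in}-\bar s)$ for all considered $\bar D$.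
   Context: $s_\mathrm{eq}(\bar s,\bar D)=\lim_{t\to\infty}s(t)$, where $(s,b)$ solves $\dot s=-\mu(s)b+D(s_\mathrm{in}-s)$, $\dot b=\mu(s)b-Db$ with $D=\operatorname{sat}_{[D_{\min},D_{\max}]}(\bar D-G_1(s-\bar s))$ from any initial condition in $[0,s_\mathrm{in})\times(0,\infty)$. The saturation function is $\operatorname{sat}_{[D_{\min},D_{\max}]}(x)=D_{\max}$ if $x>D_{\max}$, $=x$ if $x\in[D_{\min},D_{\max}]$, $=D_{\min}$ if $x<D_{\min}$. *)

(* Defs.v *)
From Stdlib Require Import Reals Lra.
Open Scope R_scope.

Definition sat (dmin dmax x : R) : R :=
  if Rlt_dec dmax x then dmax else if Rlt_dec x dmin then dmin else x.

Definition has_deriv_within (a b : R) (f : R -> R) (x l : R) : Prop :=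
  forall eps, 0 < eps -> exists delta, 0 < delta /\
    forall h, h <> 0 -> Rabs h < delta -> a <= x + h <= b ->
      Rabs ((f (x + h) - f x) / h - l) < eps.

Definition continuous_within (a b : R) (f : R -> R) (x : R) : Prop :=
  forall eps, 0 < eps -> exists delta, 0 < delta /\
    forall y, a <= y <= b -> Rabs (y - x) < delta -> Rabs (f y - f x) < eps.

(* (s,b) is a solution on [0,oo) of the closed-loop chemostat
     s' = -mu(s) b + D (s_in - s),  b' = mu(s) b - D b,
     D = sat_[Dmin,Dmax](Dbar - G1 (s - sbar)),
   starting at (s0,b0): continuous on [0,oo) (right-continuous at 0),
   differentiable on (0,oo), and s stays in the domain [0,s_in] of mu. *)
Definition closed_loop_solution (mu : R -> R) (s_in Dmin Dmax G1 sbar Dbar : R)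
    (s0 b0 : R) (s b : R -> R) : Prop :=
  s 0 = s0 /\ b 0 = b0 /\
  (forall eps, 0 < eps -> exists delta, 0 < delta /\
     forall t, 0 <= t < delta -> Rabs (s t - s0) < eps /\ Rabs (b t - b0) < eps) /\
  (forall t, 0 <= t -> 0 <= s t <= s_in) /\
  (forall t, 0 < t ->
     let D := sat Dmin Dmax (Dbar - G1 * (s t - sbar)) in
     derivable_pt_lim s t (- mu (s t) * b t + D * (s_in - s t)) /\
     derivable_pt_lim b t (mu (s t) * b t - D * b t)).

(* x = s_eq(sbar,Dbar): the limit as t -> oo of s(t), for every solution
   from every initial condition in [0,s_in) x (0,oo). *)
Definition is_s_eq (mu : R -> R) (s_in Dmin Dmax G1 sbar Dbar x : R) : Prop :=
  forall s0 b0 (s b : R -> R),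
    0 <= s0 < s_in -> 0 < b0 ->
    closed_loop_solution mu s_in Dmin Dmax G1 sbar Dbar s0 b0 s b ->
    forall eps, 0 < eps -> exists T, forall t, T <= t -> Rabs (s t - x) < eps.

(* Main.v *)
Require Import Defs.
From Stdlib Require Import Reals Lra ClassicalEpsilon Classical.
Open Scope R_scope.

Lemma cont_intro f x :
  (forall eps, 0 < eps -> exists d, 0 < d /\ forall y, Rabs (y - x) < d -> Rabs (f y - f x) < eps) ->
  continuity_pt f x.
Proof.
  intros H eps Heps. destruct (H eps Heps) as [d [Hd H']].
  exists d; split; [lra|]. intros y [_ Hy]. apply H'. exact Hy.
Qed.

Lemma cont_elim f x : continuity_pt f x ->
  forall eps, 0 < eps -> exists d, 0 < d /\ forall y, Rabs (y - x) < d -> Rabs (f y - f x) < eps.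
Proof.
  intros H eps Heps. destruct (H eps Heps) as [d [Hd H']].
  exists d; split; [lra|]. intros y Hy.
  destruct (Req_dec y x) as [->|Hne].
  - unfold Rminus; rewrite Rplus_opp_r, Rabs_R0; lra.
  - apply (H' y). split; [split; [exact I| auto]| exact Hy].
Qed.

Lemma dcont f x l : derivable_pt_lim f x l -> continuity_pt f x.
Proof. intro H. apply derivable_continuous_pt. exists l. exact H. Qed.

Lemma sat_lip a b x y : a <= b -> Rabs (sat a b x - sat a b y) <= Rabs (x - y).
Proof. intros. unfold sat; repeat destruct Rlt_dec; unfold Rabs; repeat destruct Rcase_abs; lra. Qed.

Lemma sat_range a b x : a <= b -> a <= sat a b x <= b.
Proof. intros. unfold sat; repeat destruct Rlt_dec; lra. Qed.

Definition clamp lo hi x := Rmax lo (Rmin hi x).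

Lemma clamp_in lo hi x : lo <= hi -> lo <= clamp lo hi x <= hi.
Proof. intros. unfold clamp, Rmax, Rmin; repeat destruct Rle_dec; lra. Qed.

Lemma clamp_id lo hi x : lo <= x <= hi -> clamp lo hi x = x.
Proof. intros. unfold clamp, Rmax, Rmin; repeat destruct Rle_dec; lra. Qed.

Lemma clamp_lip lo hi x y : lo <= hi -> Rabs (clamp lo hi x - clamp lo hi y) <= Rabs (x - y).
Proof. intros. unfold clamp, Rmax, Rmin; repeat destruct Rle_dec; unfold Rabs; repeat destruct Rcase_abs; lra. Qed.

Lemma within_clamp lo hi f : lo <= hi ->
  (forall x, lo <= x <= hi -> continuous_within lo hi f x) ->
  forall c, continuity_pt (fun x => f (clamp lo hi x)) c.
Proof.
  intros Hlh Hc c. apply cont_intro. intros eps Heps.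
  destruct (Hc (clamp lo hi c) (clamp_in lo hi c Hlh) eps Heps) as [d [Hd H']].
  exists d; split; auto. intros y Hy. apply H'. apply clamp_in; auto.
  eapply Rle_lt_trans; [apply clamp_lip; auto| exact Hy].
Qed.

Lemma hd_within_cont a b f x l : has_deriv_within a b f x l -> continuous_within a b f x.
Proof.
  intros H eps Heps. destruct (H 1 Rlt_0_1) as [d1 [Hd1 H1]].
  exists (Rmin d1 (eps / (Rabs l + 1))). split.
  { apply Rmin_glb_lt; auto. apply Rdiv_lt_0_compat; auto. pose proof (Rabs_pos l); lra. }
  intros y Hy Hyx.
  destruct (Req_dec y x) as [->|Hne].
  { unfold Rminus; rewrite Rplus_opp_r, Rabs_R0; lra. }
  set (h := y - x).
  assert (Hh : h <> 0) by (unfold h; lra).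
  assert (Hy' : y = x + h) by (unfold h; ring).
  rewrite Hy' in Hy.
  assert (Hh1 : Rabs h < d1) by (eapply Rlt_le_trans; [exact Hyx| apply Rmin_l]).
  assert (Hh2 : Rabs h < eps / (Rabs l + 1)) by (eapply Rlt_le_trans; [exact Hyx| apply Rmin_r]).
  specialize (H1 h Hh Hh1 Hy).
  set (q := (f (x + h) - f x) / h) in H1.
  assert (Hq : f y - f x = q * h) by (unfold q; rewrite Hy'; field; auto).
  rewrite Hq, Rabs_mult.
  assert (Rabs q < Rabs l + 1).
  { replace q with ((q - l) + l) by ring. pose proof (Rabs_triang (q - l) l); lra. }
  assert (Rabs h * (Rabs l + 1) < eps).
  { apply (Rmult_lt_compat_r (Rabs l + 1)) in Hh2; [|pose proof (Rabs_pos l); lra].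
    unfold Rdiv in Hh2. rewrite Rmult_assoc, Rinv_l in Hh2; [lra|]. pose proof (Rabs_pos l); lra. }
  pose proof (Rabs_pos h). pose proof (Rabs_pos q). nra.
Qed.

Lemma hd_interior a b f x l : has_deriv_within a b f x l -> a < x < b -> derivable_pt_lim f x l.
Proof.
  intros H Hx eps Heps. destruct (H eps Heps) as [d [Hd H']].
  assert (Hp : 0 < Rmin d (Rmin (x - a) (b - x))).
  { repeat apply Rmin_glb_lt; lra. }
  exists (mkposreal _ Hp). simpl. intros h Hh Hlt. apply H'; auto.
  - eapply Rlt_le_trans; [exact Hlt| apply Rmin_l].
  - assert (Rabs h < Rmin (x - a) (b - x)) by (eapply Rlt_le_trans; [exact Hlt| apply Rmin_r]).
    assert (Rabs h < x - a) by (eapply Rlt_le_trans; [exact H0| apply Rmin_l]).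
    assert (Rabs h < b - x) by (eapply Rlt_le_trans; [exact H0| apply Rmin_r]).
    revert H0 H1 H2; unfold Rabs; destruct Rcase_abs; intros; lra.
Qed.

Lemma cw_plus_lip a b f g x K : 0 <= K -> continuous_within a b f x ->
  (forall y, Rabs (g y - g x) <= K * Rabs (y - x)) ->
  continuous_within a b (fun y => f y + g y) x.
Proof.
  intros HK Hf Hg eps Heps.
  destruct (Hf (eps/2) ltac:(lra)) as [d [Hd H']].
  exists (Rmin d (eps / (2 * (K + 1)))). split.
  { apply Rmin_glb_lt; auto. apply Rdiv_lt_0_compat; lra. }
  intros y Hy Hyx.
  assert (H1 : Rabs (y - x) < d) by (eapply Rlt_le_trans; [exact Hyx| apply Rmin_l]).
  assert (H2 : Rabs (y - x) < eps / (2 * (K + 1))) by (eapply Rlt_le_trans; [exact Hyx| apply Rmin_r]).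
  specialize (H' y Hy H1). specialize (Hg y).
  assert (K * Rabs (y - x) <= eps / 2).
  { assert (Rabs (y - x) * (2 * (K+1)) < eps).
    { apply (Rmult_lt_compat_r (2*(K+1))) in H2; [|lra]. unfold Rdiv in H2.
      rewrite Rmult_assoc, Rinv_l in H2; lra. }
    pose proof (Rabs_pos (y - x)). nra. }
  replace (f y + g y - (f x + g x)) with ((f y - f x) + (g y - g x)) by ring.
  pose proof (Rabs_triang (f y - f x) (g y - g x)). lra.
Qed.

Lemma quot_neg a h : 0 < h -> a / h < 0 -> a < 0.
Proof. intros Hh Hq. assert (a = (a / h) * h) by (field; lra). nra. Qed.

Lemma barrier (f : R -> R) (t1 L : R) :
  (forall t, t1 <= t -> exists l, derivable_pt_lim f t l /\ (f t = L -> l < 0)) ->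
  f t1 <= L -> forall t, t1 <= t -> f t <= L.
Proof.
  intros Hd H1 t2 Ht2. destruct (Rle_or_lt (f t2) L) as [|Hgt]; auto. exfalso.
  set (E := fun t => t1 <= t <= t2 /\ f t <= L).
  assert (Hb : bound E) by (exists t2; intros y [[_ ?] _]; auto).
  assert (Hne : exists y, E y) by (exists t1; unfold E; lra).
  destruct (completeness E Hb Hne) as [c [Hub Hlub]].
  assert (Hc1 : t1 <= c) by (apply Hub; unfold E; lra).
  assert (Hc2 : c <= t2) by (apply Hlub; intros y [[_ ?] _]; auto).
  destruct (Hd c Hc1) as [l [Hl Hlneg]].
  pose proof (cont_elim _ _ (dcont _ _ _ Hl)) as Hcont.
  destruct (Rlt_or_le L (f c)) as [Hfc|Hfc].
  { destruct (Hcont (f c - L) ltac:(lra)) as [d [Hd0 Hd']].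
    assert (c <= c - d/2); [|lra].
    apply Hlub. intros y [[Hy1 Hy2] Hy3].
    destruct (Rle_or_lt y (c - d/2)); auto.
    assert (y <= c) by (apply Hub; unfold E; lra).
    assert (Hyc : Rabs (y - c) < d) by (unfold Rabs; destruct Rcase_abs; lra).
    specialize (Hd' y Hyc). revert Hd'; unfold Rabs; destruct Rcase_abs; intros; lra. }
  assert (Hct : c < t2) by (destruct (Rle_lt_or_eq _ _ Hc2); auto; subst; lra).
  assert (Hex : exists h, 0 < h /\ c + h <= t2 /\ f (c + h) <= L).
  { destruct (Rle_lt_or_eq _ _ Hfc) as [Hlt|Heq].
    - destruct (Hcont (L - f c) ltac:(lra)) as [d [Hd0 Hd']].
      exists (Rmin (d/2) (t2 - c)). assert (0 < Rmin (d/2) (t2 - c)) by (apply Rmin_glb_lt; lra).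
      split; auto. split; [pose proof (Rmin_r (d/2) (t2 - c)); lra|].
      assert (Rmin (d/2) (t2 - c) <= d/2) by apply Rmin_l.
      assert (Hyc : Rabs (c + Rmin (d / 2) (t2 - c) - c) < d) by (unfold Rabs; destruct Rcase_abs; lra).
      specialize (Hd' _ Hyc). revert Hd'; unfold Rabs; destruct Rcase_abs; intros; lra.
    - assert (l < 0) by (apply Hlneg; auto).
      destruct (Hl (- l) ltac:(lra)) as [d Hd'].
      set (h := Rmin (d/2) (t2 - c)).
      assert (0 < h) by (apply Rmin_glb_lt; [destruct d; simpl; lra| lra]).
      assert (h <= d/2) by apply Rmin_l. assert (h <= t2 - c) by apply Rmin_r.
      exists h. split; auto. split; [lra|].
      assert (Hhd : Rabs h < d) by (unfold Rabs; destruct Rcase_abs; destruct d; simpl in *; lra).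
      specialize (Hd' h ltac:(lra) Hhd).
      assert (Hq : (f (c + h) - f c) / h < 0) by (revert Hd'; unfold Rabs; destruct Rcase_abs; intros; lra).
      apply quot_neg in Hq; auto. lra. }
  destruct Hex as [h [Hh [Hh2 Hh3]]].
  assert (c + h <= c); [|lra]. apply Hub. unfold E; lra.
Qed.

Lemma lin_upper f f' a b M :
  (forall t, a <= t <= b -> derivable_pt_lim f t (f' t)) ->
  (forall t, a <= t <= b -> f' t <= M) -> a <= b -> f b - f a <= M * (b - a).
Proof.
  intros Hd HM Hab. destruct (Rle_lt_or_eq _ _ Hab) as [Hlt|Heq].
  - destruct (MVT_cor2 f f' a b Hlt Hd) as [c [Hc Hc']]. rewrite Hc.
    specialize (HM c ltac:(lra)). nra.
  - subst. lra.
Qed.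

Lemma lin_lower f f' a b M :
  (forall t, a <= t <= b -> derivable_pt_lim f t (f' t)) ->
  (forall t, a <= t <= b -> M <= f' t) -> a <= b -> M * (b - a) <= f b - f a.
Proof.
  intros Hd HM Hab. destruct (Rle_lt_or_eq _ _ Hab) as [Hlt|Heq].
  - destruct (MVT_cor2 f f' a b Hlt Hd) as [c [Hc Hc']]. rewrite Hc.
    specialize (HM c ltac:(lra)). nra.
  - subst. lra.
Qed.

Lemma abs_of_sq w e : 0 < e -> w * w < e * e -> Rabs w < e.
Proof. intros. unfold Rabs; destruct Rcase_abs; nra. Qed.

Lemma w_deriv (mu Df : R -> R) s_in (s b : R -> R) t :
  derivable_pt_lim s t (- mu (s t) * b t + Df (s t) * (s_in - s t)) ->
  derivable_pt_lim b t (mu (s t) * b t - Df (s t) * b t) ->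
  derivable_pt_lim (fun t => s t + b t - s_in) t (- Df (s t) * (s t + b t - s_in)).
Proof.
  intros Hs Hb.
  pose proof (derivable_pt_lim_minus _ _ _ _ _ (derivable_pt_lim_plus _ _ _ _ _ Hs Hb) (derivable_pt_lim_const s_in t)) as H.
  replace (- Df (s t) * (s t + b t - s_in)) with
    (- mu (s t) * b t + Df (s t) * (s_in - s t) + (mu (s t) * b t - Df (s t) * b t) - 0) by ring.
  exact H.
Qed.

Lemma w_to_0 (mu Df : R -> R) s_in Dmin Dmax (s b : R -> R) :
  0 < Dmin -> (forall x, Dmin <= Df x <= Dmax) ->
  (forall t, 0 < t -> derivable_pt_lim s t (- mu (s t) * b t + Df (s t) * (s_in - s t)) /\
                      derivable_pt_lim b t (mu (s t) * b t - Df (s t) * b t)) ->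
  forall e, 0 < e -> exists T, 1 <= T /\ forall t, T <= t -> Rabs (s t + b t - s_in) < e.
Proof.
  intros HDmin HDf Hd e He.
  set (w := fun t => s t + b t - s_in).
  set (q := fun t => w t * w t).
  set (q' := fun t => - Df (s t) * w t * w t + w t * (- Df (s t) * w t)).
  assert (Hq : forall t, 0 < t -> derivable_pt_lim q t (q' t)).
  { intros t Ht. destruct (Hd t Ht) as [Hs Hb].
    pose proof (w_deriv mu Df s_in s b t Hs Hb) as Hw.
    exact (derivable_pt_lim_mult w w t _ _ Hw Hw). }
  assert (Hq'le : forall t, q' t <= -2 * Dmin * q t).
  { intro t. unfold q', q. specialize (HDf (s t)). assert (0 <= w t * w t) by nra.
    assert (0 <= (Df (s t) - Dmin) * (w t * w t)) by (apply Rmult_le_pos; lra). nra. }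
  assert (Hq0 : forall t, 0 <= q t) by (intro t; unfold q; nra).
  assert (Hex : exists t0, 1 <= t0 /\ q t0 < e * e).
  { apply NNPP. intro Hn.
    assert (Hall : forall t, 1 <= t -> e * e <= q t).
    { intros t Ht. destruct (Rlt_or_le (q t) (e * e)); auto. exfalso; apply Hn; exists t; auto. }
    set (K := 2 * Dmin * (e * e)). assert (HK : 0 < K) by (unfold K; apply Rmult_lt_0_compat; [lra| nra]).
    set (t := 1 + (q 1 / K + 1)).
    assert (Hqt := lin_upper q q' 1 t (- K) ltac:(intros; apply Hq; lra)).
    assert (Hle : q t - q 1 <= - K * (t - 1)).
    { apply Hqt.
      - intros r Hr. specialize (Hall r ltac:(lra)). specialize (Hq'le r). unfold K. nra.
      - unfold t. assert (0 <= q 1 / K) by (apply Rmult_le_pos; [auto| left; apply Rinv_0_lt_compat; auto]). lra. }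
    assert (- K * (t - 1) = - q 1 - K) by (unfold t; field; lra).
    specialize (Hq0 t). lra. }
  destruct Hex as [t0 [Ht0 Hqt0]]. exists t0. split; auto. intros t Ht.
  assert (q t - q t0 <= 0 * (t - t0)).
  { apply (lin_upper q q'); auto.
    - intros; apply Hq; lra.
    - intros r Hr. specialize (Hq'le r). specialize (Hq0 r). nra. }
  apply abs_of_sq; auto. fold (w t). unfold q in *. lra.
Qed.

Lemma dexp K t : derivable_pt_lim (fun t => exp (K * t)) t (K * exp (K * t)).
Proof.
  pose proof (derivable_pt_lim_comp (mult_real_fct K id) exp t _ _
     (derivable_pt_lim_scal id K t 1 (derivable_pt_lim_id t)) (derivable_pt_lim_exp _)) as H.
  replace (K * exp (K * t)) with (exp (mult_real_fct K id t) * (K * 1)) by (unfold mult_real_fct, id; ring).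
  exact H.
Qed.

Lemma pos_of_prod a b : 0 < b -> 0 < a * b -> 0 < a.
Proof. intros. destruct (Rlt_or_le 0 a); auto. nra. Qed.

Lemma b_pos (mu Df : R -> R) Dmax (s b : R -> R) b0 :
  (forall t, 0 < t -> 0 <= mu (s t)) -> (forall x, Df x <= Dmax) ->
  (forall t, 0 < t -> derivable_pt_lim b t (mu (s t) * b t - Df (s t) * b t)) ->
  0 < b0 ->
  (forall eps, 0 < eps -> exists delta, 0 < delta /\ forall t, 0 <= t < delta -> Rabs (b t - b0) < eps) ->
  forall t, 0 < t -> 0 < b t.
Proof.
  intros Hmu HDf Hb Hb0 Hc t Ht.
  destruct (Hc (b0/2) ltac:(lra)) as [d [Hd Hd']].
  set (t1 := Rmin t (d/2)).
  assert (Ht1 : 0 < t1) by (apply Rmin_glb_lt; lra).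
  assert (Ht1t : t1 <= t) by apply Rmin_l.
  assert (Ht1d : t1 <= d/2) by apply Rmin_r.
  assert (Hbt1 : 0 < b t1).
  { specialize (Hd' t1 ltac:(lra)). revert Hd'; unfold Rabs; destruct Rcase_abs; intros; lra. }
  set (K := Dmax + 1).
  set (phi := fun t => b t * exp (K * t)).
  assert (Hphi1 : 0 < phi t1) by (unfold phi; pose proof (exp_pos (K * t1)); nra).
  assert (Hbar := barrier (fun t => - phi t) t1 (- phi t1)).
  assert (Hle : - phi t <= - phi t1).
  { apply Hbar; [| lra | auto].
    intros r Hr.
    set (br := mu (s r) * b r - Df (s r) * b r).
    exists (- (br * exp (K * r) + b r * (K * exp (K * r)))). split.
    - apply (derivable_pt_lim_opp phi).
      exact (derivable_pt_lim_mult b (fun t => exp (K * t)) r _ _ (Hb r ltac:(lra)) (dexp K r)).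
    - intro Heq. assert (Hpr : phi r = phi t1) by lra.
      assert (He : 0 < exp (K * r)) by apply exp_pos.
      assert (Hbr : 0 < b r) by (apply (pos_of_prod _ (exp (K * r))); auto; unfold phi in Hpr; rewrite Hpr; auto).
      specialize (Hmu r ltac:(lra)). specialize (HDf (s r)).
      assert (0 < (mu (s r) - Df (s r) + K) * b r) by (apply Rmult_lt_0_compat; unfold K; lra).
      unfold br.
      assert (0 < (mu (s r) - Df (s r) + K) * b r * exp (K * r)) by (apply Rmult_lt_0_compat; auto).
      nra. }
  apply (pos_of_prod _ (exp (K * t))); [apply exp_pos|]. unfold phi in *. lra.
Qed.

Lemma converge (mu Df : R -> R) s_in Dmin Dmax L L' m1 m2 (s b : R -> R) :
  0 < Dmin -> 0 < Dmax -> (forall x, Dmin <= Df x <= Dmax) ->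
  (forall t, 0 < t -> 0 <= s t <= s_in) ->
  (forall t, 0 < t -> 0 <= mu (s t) <= Dmax) ->
  (forall t, 0 < t -> 0 < b t) ->
  (forall t, 0 < t -> derivable_pt_lim s t (- mu (s t) * b t + Df (s t) * (s_in - s t)) /\
                      derivable_pt_lim b t (mu (s t) * b t - Df (s t) * b t)) ->
  0 <= L' -> L' < L -> L < s_in ->
  0 < m1 -> (forall x, L <= x <= s_in -> m1 <= mu x - Df x) ->
  0 < m2 -> (forall x, 0 <= x <= L' -> mu x - Df x <= - m2) ->
  exists T, forall t, T <= t -> L' <= s t <= L.
Proof.
  intros HDmin HDmax HDf Hs Hmu Hbp Hd HL' HLL HL Hm1 HF1 Hm2 HF2.
  set (A1 := (s_in - L) * m1). assert (HA1 : 0 < A1) by (unfold A1; apply Rmult_lt_0_compat; lra).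
  set (A2 := (s_in - L') * m2). assert (HA2 : 0 < A2) by (unfold A2; apply Rmult_lt_0_compat; lra).
  set (e := Rmin (Rmin (A1 / (Dmax + 1)) (A2 / (Dmax + 1))) ((s_in - L') / 2)).
  assert (He1 : e <= A1 / (Dmax + 1)) by (unfold e; eapply Rle_trans; apply Rmin_l).
  assert (He2 : e <= A2 / (Dmax + 1)) by (unfold e; eapply Rle_trans; [apply Rmin_l| apply Rmin_r]).
  assert (He3 : e <= (s_in - L') / 2) by (unfold e; apply Rmin_r).
  assert (He : 0 < e).
  { unfold e. repeat apply Rmin_glb_lt; try apply Rdiv_lt_0_compat; lra. }
  assert (HE1 : (Dmax + 1) * e <= A1).
  { assert (A1 = (A1 / (Dmax + 1)) * (Dmax + 1)) by (field; lra). nra. }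
  assert (HE2 : (Dmax + 1) * e <= A2).
  { assert (A2 = (A2 / (Dmax + 1)) * (Dmax + 1)) by (field; lra). nra. }
  destruct (w_to_0 mu Df s_in Dmin Dmax s b HDmin HDf Hd e He) as [T0 [HT0 Hw]].
  assert (Hbd : forall t, 0 < t -> derivable_pt_lim b t (mu (s t) * b t - Df (s t) * b t)) by (intros; apply Hd; auto).
  assert (Ht1 : exists t1, T0 <= t1 /\ s t1 <= L).
  { apply NNPP. intro Hn.
    assert (Hall : forall t, T0 <= t -> L < s t).
    { intros t Ht. destruct (Rlt_or_le L (s t)); auto. exfalso; apply Hn; exists t; auto. }
    set (B := b T0). assert (HB : 0 < B) by (apply Hbp; lra).
    assert (HbB : forall t, T0 <= t -> B <= b t).
    { intros t Ht.
      assert (- b t <= - B); [|lra].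
      apply (barrier (fun t => - b t) T0 (- B)); [| cbv beta; unfold B; lra| auto].
      intros r Hr. exists (- (mu (s r) * b r - Df (s r) * b r)). split.
      - apply (derivable_pt_lim_opp b). apply Hbd; lra.
      - intro Heq. cbv beta in Heq. assert (Hbr : b r = B) by lra.
        specialize (HF1 (s r) ltac:(split; [left; apply Hall; lra| apply Hs; lra])).
        assert (0 < (mu (s r) - Df (s r)) * b r) by (apply Rmult_lt_0_compat; lra). lra. }
    set (t := T0 + ((s_in + e) / (m1 * B) + 1)).
    assert (HmB : 0 < m1 * B) by (apply Rmult_lt_0_compat; lra).
    assert (Hq : 0 <= (s_in + e) / (m1 * B)).
    { apply Rmult_le_pos; [lra| left; apply Rinv_0_lt_compat; auto]. }
    assert (Hlow : (m1 * B) * (t - T0) <= b t - b T0).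
    { apply (lin_lower b (fun r => mu (s r) * b r - Df (s r) * b r)).
      - intros r Hr; apply Hbd; lra.
      - intros r Hr. specialize (HbB r ltac:(lra)).
        specialize (HF1 (s r) ltac:(split; [left; apply Hall; lra| apply Hs; lra])).
        assert (m1 * B <= m1 * b r) by (apply Rmult_le_compat_l; lra).
        assert (m1 * b r <= (mu (s r) - Df (s r)) * b r) by (apply Rmult_le_compat_r; lra).
        lra.
      - unfold t; lra. }
    assert (Heq : (m1 * B) * (t - T0) = s_in + e + m1 * B) by (unfold t; field; lra).
    specialize (Hw t ltac:(unfold t; lra)). specialize (Hs t ltac:(unfold t; lra)).
    assert (s t + b t - s_in < e) by (revert Hw; unfold Rabs; destruct Rcase_abs; intros; lra).
    fold B in Hlow. lra. }
  assert (Ht2 : exists t2, T0 <= t2 /\ L' <= s t2).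
  { apply NNPP. intro Hn.
    assert (Hall : forall t, T0 <= t -> s t < L').
    { intros t Ht. destruct (Rlt_or_le (s t) L'); auto. exfalso; apply Hn; exists t; auto. }
    set (be := (s_in - L') / 2). assert (Hbe : 0 < be) by (unfold be; lra).
    assert (Hbge : forall t, T0 <= t -> be <= b t).
    { intros t Ht. specialize (Hw t Ht). specialize (Hall t Ht).
      assert (- e < s t + b t - s_in) by (revert Hw; unfold Rabs; destruct Rcase_abs; intros; lra).
      unfold be in *; lra. }
    assert (Hmb : 0 < m2 * be) by (apply Rmult_lt_0_compat; lra).
    set (t := T0 + (b T0 / (m2 * be) + 1)).
    assert (Hq : 0 <= b T0 / (m2 * be)).
    { apply Rmult_le_pos; [left; apply Hbp; lra| left; apply Rinv_0_lt_compat; auto]. }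
    assert (Hup : b t - b T0 <= (- (m2 * be)) * (t - T0)).
    { apply (lin_upper b (fun r => mu (s r) * b r - Df (s r) * b r)).
      - intros r Hr; apply Hbd; lra.
      - intros r Hr. specialize (Hbge r ltac:(lra)).
        specialize (HF2 (s r) ltac:(split; [apply Hs; lra| left; apply Hall; lra])).
        assert (m2 * be <= m2 * b r) by (apply Rmult_le_compat_l; lra).
        assert ((mu (s r) - Df (s r)) * b r <= - m2 * b r) by (apply Rmult_le_compat_r; lra).
        lra.
      - unfold t; lra. }
    assert (Heq : (- (m2 * be)) * (t - T0) = - b T0 - m2 * be) by (unfold t; field; lra).
    specialize (Hbge t ltac:(unfold t; lra)). lra. }
  destruct Ht1 as [t1 [Ht1 Hst1]]. destruct Ht2 as [t2 [Ht2 Hst2]].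
  exists (Rmax t1 t2). intros t Ht.
  assert (t1 <= t) by (eapply Rle_trans; [apply Rmax_l| exact Ht]).
  assert (t2 <= t) by (eapply Rle_trans; [apply Rmax_r| exact Ht]).
  split.
  - assert (- s t <= - L'); [|lra].
    apply (barrier (fun t => - s t) t2 (- L')); [| cbv beta; lra| auto].
    intros r Hr. exists (- (- mu (s r) * b r + Df (s r) * (s_in - s r))). split.
    + apply (derivable_pt_lim_opp s). apply Hd; lra.
    + intro Heq. cbv beta in Heq. assert (Hsr : s r = L') by lra.
      specialize (Hw r ltac:(lra)). specialize (Hmu r ltac:(lra)).
      specialize (HF2 (s r) ltac:(lra)).
      set (w := s r + b r - s_in) in *.
      assert (Hbr : b r = w + s_in - s r) by (unfold w; ring).
      rewrite Hbr.
      assert (mu (s r) * w <= (Dmax + 1) * Rabs w).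
      { pose proof (Rle_abs w). pose proof (Rabs_pos w). nra. }
      assert ((Dmax + 1) * Rabs w < (Dmax + 1) * e) by (apply Rmult_lt_compat_l; lra).
      assert (A2 <= (Df (s r) - mu (s r)) * (s_in - s r)) by (unfold A2; replace (s_in - s r) with (s_in - L') by lra; nra).
      nra.
  - apply (barrier s t1 L); [| auto| auto].
    intros r Hr. exists (- mu (s r) * b r + Df (s r) * (s_in - s r)). split.
    + apply Hd; lra.
    + intro Hsr.
      specialize (Hw r ltac:(lra)). specialize (Hmu r ltac:(lra)).
      specialize (HF1 (s r) ltac:(lra)).
      set (w := s r + b r - s_in) in *.
      assert (Hbr : b r = w + s_in - s r) by (unfold w; ring).
      rewrite Hbr.
      assert (- (mu (s r) * w) <= (Dmax + 1) * Rabs w).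
      { pose proof (Rle_abs (- w)). rewrite Rabs_Ropp in H1. pose proof (Rabs_pos w). nra. }
      assert ((Dmax + 1) * Rabs w < (Dmax + 1) * e) by (apply Rmult_lt_compat_l; lra).
      assert (A1 <= (mu (s r) - Df (s r)) * (s_in - s r)) by (unfold A1; replace (s_in - s r) with (s_in - L) by lra; nra).
      nra.
Qed.

Lemma inv_bound q k eps : 0 < k -> 0 < eps -> Rabs (q - k) < Rmin (k/2) (eps * k * k / 2) ->
  Rabs (1 / q - 1 / k) < eps.
Proof.
  intros Hk He Hq.
  assert (H1 : Rabs (q - k) < k/2) by (eapply Rlt_le_trans; [exact Hq| apply Rmin_l]).
  assert (H2 : Rabs (q - k) < eps * k * k / 2) by (eapply Rlt_le_trans; [exact Hq| apply Rmin_r]).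
  assert (Hq2 : k / 2 < q) by (revert H1; unfold Rabs; destruct Rcase_abs; intros; lra).
  assert (Hqp : 0 < q) by lra.
  replace (1 / q - 1 / k) with ((k - q) / (q * k)) by (field; lra).
  unfold Rdiv. rewrite Rabs_mult, Rabs_inv by nra.
  rewrite (Rabs_pos_eq (q * k)) by nra.
  rewrite <- Rabs_Ropp. replace (- (k - q)) with (q - k) by ring.
  apply (Rmult_lt_reg_r (q * k)); [nra|].
  rewrite Rmult_assoc, Rinv_l by nra. rewrite Rmult_1_r.
  assert (eps * k * k / 2 < eps * (q * k)).
  { assert (eps * k * (k/2) < eps * k * q) by (apply Rmult_lt_compat_l; [nra| lra]). nra. }
  lra.
Qed.

Lemma inv_deriv (H g : R -> R) a b lo hi D0 k :
  (forall D, lo < D < hi -> a < g D < b /\ H (g D) = D) ->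
  (forall y z, a < y -> y < z -> z < b -> H y < H z) ->
  lo < D0 < hi -> derivable_pt_lim H (g D0) k -> 0 < k ->
  derivable_pt_lim g D0 (1 / k).
Proof.
  intros Hg Hmono HD0 HdH Hk eps Heps.
  set (x0 := g D0). destruct (Hg D0 HD0) as [Hx0 HHx0]. fold x0 in Hx0, HHx0.
  assert (Hep : 0 < Rmin (k/2) (eps * k * k / 2)).
  { apply Rmin_glb_lt; [lra|]. assert (0 < eps * k * k) by (repeat apply Rmult_lt_0_compat; lra). lra. }
  destruct (HdH _ Hep) as [d1 Hd1].
  set (r := Rmin (d1/2) (Rmin ((x0 - a)/2) ((b - x0)/2))).
  assert (Hr : 0 < r) by (unfold r; destruct d1; simpl; repeat apply Rmin_glb_lt; lra).
  assert (Hr1 : r <= d1/2) by apply Rmin_l.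
  assert (Hr2 : r <= (x0 - a)/2) by (unfold r; eapply Rle_trans; [apply Rmin_r| apply Rmin_l]).
  assert (Hr3 : r <= (b - x0)/2) by (unfold r; eapply Rle_trans; [apply Rmin_r| apply Rmin_r]).
  assert (Hup : D0 < H (x0 + r)) by (rewrite <- HHx0; apply Hmono; lra).
  assert (Hlo : H (x0 - r) < D0) by (rewrite <- HHx0; apply Hmono; lra).
  set (dl := Rmin (Rmin (H (x0 + r) - D0) (D0 - H (x0 - r))) (Rmin (D0 - lo) (hi - D0))).
  assert (Hdl : 0 < dl) by (unfold dl; repeat apply Rmin_glb_lt; lra).
  exists (mkposreal dl Hdl). simpl. intros h Hh Hhd.
  assert (Hb1 : Rabs h < H (x0 + r) - D0) by (eapply Rlt_le_trans; [exact Hhd|]; unfold dl; eapply Rle_trans; apply Rmin_l).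
  assert (Hb2 : Rabs h < D0 - H (x0 - r)) by (eapply Rlt_le_trans; [exact Hhd|]; unfold dl; eapply Rle_trans; [apply Rmin_l| apply Rmin_r]).
  assert (Hb3 : Rabs h < D0 - lo) by (eapply Rlt_le_trans; [exact Hhd|]; unfold dl; eapply Rle_trans; [apply Rmin_r| apply Rmin_l]).
  assert (Hb4 : Rabs h < hi - D0) by (eapply Rlt_le_trans; [exact Hhd|]; unfold dl; eapply Rle_trans; [apply Rmin_r| apply Rmin_r]).
  assert (Hh' : - Rabs h <= h <= Rabs h) by (unfold Rabs; destruct Rcase_abs; lra).
  destruct (Hg (D0 + h) ltac:(lra)) as [Hx HHx].
  set (x := g (D0 + h)) in *.
  assert (Hxu : x < x0 + r).
  { destruct (Rlt_or_le x (x0 + r)) as [|Hge]; auto. exfalso.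
    destruct (Rle_lt_or_eq _ _ Hge) as [Hlt|Heq].
    - assert (H (x0 + r) < H x) by (apply Hmono; lra). lra.
    - rewrite <- Heq in HHx. lra. }
  assert (Hxl : x0 - r < x).
  { destruct (Rlt_or_le (x0 - r) x) as [|Hge]; auto. exfalso.
    destruct (Rle_lt_or_eq _ _ Hge) as [Hlt|Heq].
    - assert (H x < H (x0 - r)) by (apply Hmono; lra). lra.
    - rewrite Heq in HHx. lra. }
  set (dd := x - x0).
  assert (Hdd : dd <> 0).
  { unfold dd; intro Hz. assert (x = x0) by lra. rewrite H0, HHx0 in HHx. lra. }
  assert (Hddr : Rabs dd < d1).
  { unfold dd; unfold Rabs; destruct Rcase_abs; destruct d1; simpl in *; lra. }
  specialize (Hd1 dd Hdd Hddr).
  fold x0 in Hd1. replace (x0 + dd) with x in Hd1 by (unfold dd; ring).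
  fold x0 in Hd1.   rewrite HHx, HHx0 in Hd1. replace (D0 + h - D0) with h in Hd1 by ring.
  idtac.
  replace (dd / h) with (1 / (h / dd)) by (field; auto).
  apply inv_bound; auto.
Qed.

Theorem mainTheorem3
  (mu mu' : R -> R) (s_in s_min Dmin Dmax G1 sbar : R)
  (Hsin : 0 < s_in) (Hsmin : 0 < s_min < s_in)
  (HD : 0 < Dmin < Dmax) (HG1 : 0 < G1)
  (Hsbar : s_min <= sbar < s_in)
  (Hmu_deriv : forall s, 0 <= s <= s_in -> has_deriv_within 0 s_in mu s (mu' s))
  (Hmu'_cont : forall s, 0 <= s <= s_in -> continuous_within 0 s_in mu' s)
  (Hmu_nonneg : forall s, 0 <= s <= s_in -> 0 <= mu s)
  (Hmu0 : mu 0 = 0)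
  (Hmu_pos : forall s, 0 < s <= s_in -> 0 < mu s)
  (HDmin : forall s, s_min <= s <= s_in -> Dmin < mu s)
  (HDmax : forall s, 0 <= s <= s_in -> mu s < Dmax)
  (HG1_mu' : forall s, 0 <= s <= s_in -> - mu' s < G1)
  (HG1_Dbar : forall Dbar, Dmin < Dbar < Dmax ->
     - ((mu s_in - Dbar) / (s_in - sbar)) < G1) :
  exists s_eq : R -> R,
    forall Dbar, Dmin < Dbar < Dmax ->
      is_s_eq mu s_in Dmin Dmax G1 sbar Dbar (s_eq Dbar) /\
      mu (s_eq Dbar) = Dbar - G1 * (s_eq Dbar - sbar) /\
      derivable_pt_lim s_eq Dbar (1 / (G1 + mu' (s_eq Dbar))).
Proof.
  assert (Hmu_cw : forall x, 0 <= x <= s_in -> continuous_within 0 s_in mu x)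
    by (intros; eapply hd_within_cont; apply Hmu_deriv; auto).
  set (H := fun x => mu x + G1 * (x - sbar)).
  assert (HdH : forall x, 0 < x < s_in -> derivable_pt_lim H x (mu' x + G1)).
  { intros x Hx.
    pose proof (hd_interior _ _ _ _ _ (Hmu_deriv x ltac:(lra)) Hx) as Hm.
    pose proof (derivable_pt_lim_scal _ G1 x _ (derivable_pt_lim_minus _ _ x _ _ (derivable_pt_lim_id x) (derivable_pt_lim_const sbar x))) as Hl.
    pose proof (derivable_pt_lim_plus _ _ x _ _ Hm Hl) as Hs.
    replace (mu' x + G1) with (mu' x + G1 * (1 - 0)) by ring. exact Hs. }
  assert (Hmono : forall y z, 0 < y -> y < z -> z < s_in -> H y < H z).
  { intros y z Hy Hyz Hz.
    destruct (MVT_cor2 H (fun x => mu' x + G1) y z Hyz ltac:(intros; apply HdH; lra)) as [c [Hc Hc']].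
    specialize (HG1_mu' c ltac:(lra)). nra. }
  assert (HGsin : forall Dbar, Dmin < Dbar < Dmax -> Dbar < H s_in).
  { intros Dbar HDb. specialize (HG1_Dbar Dbar HDb). unfold H; cbv beta.
    set (q := (mu s_in - Dbar) / (s_in - sbar)) in *.
    assert (mu s_in - Dbar = q * (s_in - sbar)) by (unfold q; field; lra). nra. }
  assert (HG0 : forall Dbar, Dmin < Dbar < Dmax -> H 0 < Dbar).
  { intros Dbar HDb. unfold H. rewrite Hmu0. nra. }
  assert (Hroot : forall Dbar, exists x, Dmin < Dbar < Dmax -> 0 < x < s_in /\ H x = Dbar).
  { intro Dbar. destruct (classic (Dmin < Dbar < Dmax)) as [HDb|HDb]; [|exists 0; tauto].
    set (g := fun x => mu (clamp 0 s_in x) + (G1 * (clamp 0 s_in x - sbar) - Dbar)).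
    assert (Hgc : continuity g).
    { intro c. apply (within_clamp 0 s_in (fun y => mu y + (G1 * (y - sbar) - Dbar))); [lra|].
      intros x Hx. apply (cw_plus_lip _ _ _ _ _ G1); [lra| auto|].
      intro y. replace (G1 * (y - sbar) - Dbar - (G1 * (x - sbar) - Dbar)) with (G1 * (y - x)) by ring.
      rewrite Rabs_mult, Rabs_pos_eq by lra. lra. }
    assert (Hg0 : g 0 < 0).
    { unfold g. rewrite clamp_id by lra. specialize (HG0 Dbar HDb). unfold H in HG0. lra. }
    assert (Hg1 : 0 < g s_in).
    { unfold g. rewrite clamp_id by lra. specialize (HGsin Dbar HDb). unfold H in HGsin. lra. }
    destruct (IVT g 0 s_in Hgc Hsin Hg0 Hg1) as [z [Hz Hgz]].
    exists z. intros _.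
    assert (Hz' : clamp 0 s_in z = z) by (apply clamp_id; lra).
    assert (z <> 0) by (intro; subst; lra).
    assert (z <> s_in) by (intro; subst; lra).
    unfold g in Hgz. rewrite Hz' in Hgz.
    split; [lra|]. unfold H. lra. }
  set (seq := fun Dbar => proj1_sig (constructive_indefinite_description _ (Hroot Dbar))).
  assert (Hseq : forall Dbar, Dmin < Dbar < Dmax -> 0 < seq Dbar < s_in /\ H (seq Dbar) = Dbar).
  { intros Dbar HDb. unfold seq. destruct (constructive_indefinite_description _ (Hroot Dbar)) as [x Hx].
    simpl. auto. }
  exists seq. intros Dbar HDb.
  destruct (Hseq Dbar HDb) as [Hx HHx]. set (x := seq Dbar) in *.
  split; [|split].
  - intros s0 b0 s b Hs0 Hb0 Hsol eps Heps.
    destruct Hsol as [_ [_ [Hrc [Hsr Hder]]]].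
    set (Df := fun y => sat Dmin Dmax (Dbar - G1 * (y - sbar))).
    set (F := fun y => mu y - Df y).
    assert (HDf : forall y, Dmin <= Df y <= Dmax) by (intro; apply sat_range; lra).
    assert (Fpos : forall y, x < y <= s_in -> 0 < F y).
    { intros y Hy.
      assert (HG : Dbar < H y).
      { destruct (Rle_lt_or_eq _ _ (proj2 Hy)) as [Hlt|Heq].
        - rewrite <- HHx. apply Hmono; lra.
        - subst y. auto. }
      unfold F, Df, sat, H in *. destruct (Rlt_dec Dmax _) as [H1|H1].
      + specialize (HDmax y ltac:(lra)). lra.
      + destruct (Rlt_dec _ Dmin) as [H2|H2].
        * assert (sbar < y) by nra. specialize (HDmin y ltac:(lra)). lra.
        * lra. }
    assert (Fneg : forall y, 0 <= y < x -> F y < 0).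
    { intros y Hy.
      assert (HG : H y < Dbar).
      { destruct (Rle_lt_or_eq _ _ (proj1 Hy)) as [Hlt|Heq].
        - rewrite <- HHx. apply Hmono; lra.
        - subst y. auto. }
      unfold F, Df, sat, H in *. destruct (Rlt_dec Dmax _) as [H1|H1].
      + specialize (HDmax y ltac:(lra)). lra.
      + destruct (Rlt_dec _ Dmin) as [H2|H2].
        * assert (sbar < y) by nra. specialize (HDmin y ltac:(lra)). lra.
        * lra. }
    assert (Fcw : forall y, 0 <= y <= s_in -> continuous_within 0 s_in F y).
    { intros y Hy. apply (cw_plus_lip _ _ _ (fun z => - Df z) _ G1); [lra| auto|].
      intro z. unfold Df.
      replace (- sat Dmin Dmax (Dbar - G1 * (z - sbar)) - - sat Dmin Dmax (Dbar - G1 * (y - sbar)))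
        with (- (sat Dmin Dmax (Dbar - G1 * (z - sbar)) - sat Dmin Dmax (Dbar - G1 * (y - sbar)))) by ring.
      rewrite Rabs_Ropp. eapply Rle_trans; [apply sat_lip; lra|].
      replace (Dbar - G1 * (z - sbar) - (Dbar - G1 * (y - sbar))) with (- (G1 * (z - y))) by ring.
      rewrite Rabs_Ropp, Rabs_mult, Rabs_pos_eq by lra. lra. }
    assert (Fc := within_clamp 0 s_in F ltac:(lra) Fcw).
    set (e := Rmin eps (Rmin x (s_in - x))).
    assert (He1 : e <= eps) by apply Rmin_l.
    assert (He2 : e <= x) by (unfold e; eapply Rle_trans; [apply Rmin_r| apply Rmin_l]).
    assert (He3 : e <= s_in - x) by (unfold e; eapply Rle_trans; [apply Rmin_r| apply Rmin_r]).
    assert (He : 0 < e) by (unfold e; repeat apply Rmin_glb_lt; lra).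
    set (L := x + e / 2). set (L' := x - e / 2).
    destruct (continuity_ab_min (fun y => F (clamp 0 s_in y)) L s_in ltac:(unfold L; lra) ltac:(intros; apply Fc))
      as [mx [Hmx1 Hmx2]].
    rewrite (clamp_id 0 s_in mx) in Hmx1 by (unfold L in *; lra).
    destruct (continuity_ab_min (fun y => - F (clamp 0 s_in y)) 0 L' ltac:(unfold L'; lra)
       ltac:(intros; apply (continuity_pt_opp (fun y => F (clamp 0 s_in y))); apply Fc))
      as [mx' [Hmx1' Hmx2']].
    rewrite (clamp_id 0 s_in mx') in Hmx1' by (unfold L' in *; lra).
    assert (Hbp : forall t, 0 < t -> 0 < b t).
    { apply (b_pos mu Df Dmax s b b0); auto.
      - intros t Ht. apply Hmu_nonneg. apply Hsr; lra.
      - intro y; apply HDf.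
      - intros t Ht. exact (proj2 (Hder t Ht)).
      - intros ep Hep. destruct (Hrc ep Hep) as [d [Hd Hd']]. exists d; split; auto.
        intros t Ht. apply Hd'; auto. }
    assert (A1 : forall t, 0 < t -> 0 <= s t <= s_in) by (intros t Ht; apply Hsr; lra).
    assert (A2 : forall t, 0 < t -> 0 <= mu (s t) <= Dmax).
    { intros t Ht. assert (0 <= s t <= s_in) by (apply Hsr; lra).
      split; [apply Hmu_nonneg; auto| left; apply HDmax; auto]. }
    assert (A3 : forall t, 0 < t -> derivable_pt_lim s t (- mu (s t) * b t + Df (s t) * (s_in - s t)) /\
                      derivable_pt_lim b t (mu (s t) * b t - Df (s t) * b t)) by (intros t Ht; exact (Hder t Ht)).
    assert (A4 : 0 < F mx) by (apply Fpos; unfold L in *; lra).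
    assert (A5 : forall y, L <= y <= s_in -> F mx <= mu y - Df y).
    { intros y Hy. specialize (Hmx1 y Hy). rewrite (clamp_id 0 s_in y) in Hmx1 by (unfold L in *; lra).
      exact Hmx1. }
    assert (A6 : 0 < - F mx') by (assert (F mx' < 0) by (apply Fneg; unfold L' in *; lra); lra).
    assert (A7 : forall y, 0 <= y <= L' -> mu y - Df y <= - - F mx').
    { intros y Hy. specialize (Hmx1' y Hy). rewrite (clamp_id 0 s_in y) in Hmx1' by (unfold L' in *; lra).
      fold (F y). lra. }
    destruct (converge mu Df s_in Dmin Dmax L L' (F mx) (- F mx') s b ltac:(lra) ltac:(lra) HDf A1 A2 Hbp A3
      ltac:(unfold L'; lra) ltac:(unfold L', L; lra) ltac:(unfold L; lra) A4 A5 A6 A7) as [T HT].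
    exists T. intros t Ht. specialize (HT t Ht).
    unfold L, L' in HT. unfold Rabs; destruct Rcase_abs; lra.
  - unfold H in HHx. lra.
  - rewrite Rplus_comm.
    apply (inv_deriv H seq 0 s_in Dmin Dmax Dbar (mu' x + G1)); auto.
    + specialize (HG1_mu' x ltac:(lra)). lra.
Qed.
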